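(* There exists an algebraic structure $A$ with a single operation $f$ of countably infinite arity (i.e. $f:A^{\mathbb N}\to A$) such that the set of all non-generators of $A$ is not a substructure of $A$ (i.e. is not closed under $f$).
   Context: For an algebraic structure $A$ with operation $f:A^{\mathbb N}\to A$, a substructure is a subset closed under $f$. For $X\subseteq A$, $\langle X\rangle$ is the intersection of all substructures containing $X$, and $\langle X,a\rangle=\langle X\cup\{a\}\rangle$. An element $a\in A$ is a non-generator if for every $X\subseteq A$, $\langle X,a\rangle=A$ implies $\langle X\rangle=A$. *)

(* Defs.v *)
Definition substructure {A : Type} (f : (nat -> A) -> A) (S : A -> Prop) : Prop :=
  forall x : nat -> A, (forall n, S (x n)) -> S (f x).

Definition generated {A : Type} (f : (nat -> A) -> A) (X : A -> Prop) : A -> Prop :=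
  fun a => forall S : A -> Prop, substructure f S -> (forall y, X y -> S y) -> S a.

Definition generates {A : Type} (f : (nat -> A) -> A) (X : A -> Prop) : Prop :=
  forall a : A, generated f X a.

Definition non_generator {A : Type} (f : (nat -> A) -> A) (a : A) : Prop :=
  forall X : A -> Prop,
    generates f (fun y => X y \/ y = a) -> generates f X.

(* Main.v *)
Require Import Defs.
From Stdlib Require Import Classical ClassicalEpsilon Lia.

Definition Pinf (x : nat -> option nat) : Prop :=
  forall m, exists i k, x i = Some k /\ m <= k.

Definition fin_part (x : nat -> option nat) : option nat :=
  match x 0, x 1 with
  | None, None => Some 0
  | None, Some k => Some (S k)
  | Some (S k), _ => Some k
  | Some 0, _ => Some 0
  end.

Definition F (x : nat -> option nat) : option nat :=
  if excluded_middle_informative (Pinf x) then None else fin_part x.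

Lemma F_inf x : Pinf x -> F x = None.
Proof. intro H; unfold F; destruct excluded_middle_informative; congruence. Qed.

Lemma F_fin x : ~ Pinf x -> F x = fin_part x.
Proof. intro H; unfold F; destruct excluded_middle_informative; tauto. Qed.

Lemma gen_sub (X : option nat -> Prop) : substructure F (generated F X).
Proof. intros x H S HS HX; apply HS; intro n; apply H; auto. Qed.

Lemma gen_incl (X : option nat -> Prop) y : X y -> generated F X y.
Proof. intros H S _ HX; auto. Qed.

Lemma bounded_not_inf x b : (forall i k, x i = Some k -> k <= b) -> ~ Pinf x.
Proof. intros H P; destruct (P (S b)) as [i [k [E L]]]; apply H in E; lia. Qed.

Lemma gen_down X k : generated F X (Some (S k)) -> generated F X (Some k).
Proof.
  intro G.
  assert (E : F (fun _ => Some (S k)) = Some k).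
  { rewrite F_fin. reflexivity. apply (bounded_not_inf _ (S k)). intros i k' E; injection E; lia. }
  rewrite <- E; apply gen_sub; auto.
Qed.

Lemma gen_down_many X k0 k : generated F X (Some k0) -> k <= k0 -> generated F X (Some k).
Proof.
  intros G L; induction L; auto. apply IHL, gen_down; auto.
Qed.

Lemma gen_None_all X : generated F X None -> forall a, generated F X a.
Proof.
  intros G a.
  assert (forall k, generated F X (Some k)).
  { induction k.
    - assert (E : F (fun _ => None) = Some 0).
      { rewrite F_fin. reflexivity. apply (bounded_not_inf _ 0). intros; discriminate. }
      rewrite <- E; apply gen_sub; auto.
    - set (x := fun i : nat => match i with 0 => None | _ => Some k end).
      assert (E : F x = Some (S k)).
      { rewrite F_fin. reflexivity. apply (bounded_not_inf _ k).
        intros [|i] k' E; simpl in E; inversion E; lia. }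
      rewrite <- E; apply gen_sub. intros [|i]; simpl; auto. }
  destruct a; auto.
Qed.

Lemma ng_some n : non_generator F (Some n).
Proof.
  intros X H.
  set (G := generated F X).
  set (T := fun a => G a \/ exists k, a = Some k /\ k <= n).
  assert (SS : substructure F T).
  { intros x Hx.
    destruct (classic (Pinf x)) as [P|P].
    - left. destruct (P (S n)) as [i [k0 [E L]]].
      assert (Gk0 : G (Some k0)).
      { destruct (Hx i) as [g|[k [E2 L2]]]; rewrite E in *; auto.
        injection E2; intros; lia. }
      apply gen_sub. intro j.
      destruct (Hx j) as [g|[k [E2 L2]]]; auto.
      rewrite E2; apply (gen_down_many _ k0); auto; lia.
    - rewrite F_fin by auto. unfold fin_part.
      pose proof (Hx 0) as H0.
      destruct (x 0) as [[|k]|] eqn:E0.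
      + right; exists 0; split; [reflexivity|lia].
      + destruct H0 as [g|[k' [E2 L2]]].
        * left; apply gen_down; auto.
        * right; exists k; split; auto; injection E2; lia.
      + destruct H0 as [g|[k' [E2 L2]]]; [|discriminate].
        left; destruct (x 1); apply gen_None_all; auto. }
  assert (SN : T None).
  { apply (H None T SS). intros y [Hy|Hy].
    - left; apply gen_incl; auto.
    - right; eauto. }
  destruct SN as [g|[k [E _]]]; [|discriminate].
  intro a; apply gen_None_all; auto.
Qed.

Theorem corollary7 :
  exists (A : Type) (f : (nat -> A) -> A),
    ~ substructure f (non_generator f).
Proof.
  exists (option nat), F. intro Hs.
  assert (NG : non_generator F (F (fun i => Some i))).
  { apply Hs; intro; apply ng_some. }
  rewrite F_inf in NG by (intro m; exists m, m; auto).
  assert (Hg : generates F (fun _ : option nat => False)).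
  { apply NG. intro a; apply gen_None_all, gen_incl; auto. }
  apply (Hg None (fun _ => False)); auto.
  intros x Hx; apply (Hx 0).
Qed.
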